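(* If $X$ is a locally compact Hausdorff space that is not pseudocompact, then $X$ contains a regular closed, $\sigma$-compact, non-pseudocompact subset.
   Context: A space is pseudocompact if every continuous real-valued function on it is bounded. A subset is regular closed if it equals the closure of its interior. *)

(* Defs.v *)
From HB Require Import structures.
From mathcomp Require Import all_boot all_order all_algebra.
From mathcomp Require Import all_classical all_reals all_analysis.
Set Implicit Arguments. Unset Strict Implicit. Unset Printing Implicit Defensive.
Import Order.TTheory GRing.Theory Num.Theory numFieldTopology.Exports numFieldNormedType.Exports.
Local Open Scope classical_set_scope.
Local Open Scope ring_scope.

Definition pseudocompact_space (R : realType) (X : topologicalType) : Prop :=
  forall f : X -> R, continuous f -> exists M : R, forall x : X, `|f x| <= M.

Definition pseudocompact_set (R : realType) (X : topologicalType) (A : set X) : Prop :=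
  forall f : X -> R, {within A, continuous f} ->
    exists M : R, forall x : X, A x -> `|f x| <= M.

Definition regular_closed (X : topologicalType) (A : set X) : Prop :=
  A = closure (interior A).

Definition sigma_compact (X : topologicalType) (A : set X) : Prop :=
  exists K : nat -> set X, (forall n, compact (K n)) /\ A = \bigcup_n K n.

(* Main.v *)
Require Import Defs.
From mathcomp Require Import all_boot all_order all_algebra.
From mathcomp Require Import all_classical all_reals all_analysis.
From mathcomp Require Import lra.
Import Order.TTheory GRing.Theory Num.Theory numFieldTopology.Exports numFieldNormedType.Exports.
Local Open Scope classical_set_scope.
Local Open Scope ring_scope.

Theorem lemma3p3 (R : realType) (X : topologicalType) :
  hausdorff_space X -> locally_compact [set: X] ->
  ~ pseudocompact_space R X ->
  exists A : set X, [/\ regular_closed A, sigma_compact A & ~ pseudocompact_set R A].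
Proof.
move=> _ lcX npc.
have [f [cf unb]] : exists f : X -> R, continuous f /\
    forall M : R, exists x, M < `|f x|.
  apply: contrapT => H; apply: npc => f cf; apply: contrapT => nb; apply: H.
  exists f; split => // M; apply: contrapT => nx; apply: nb; exists M => x.
  rewrite leNgt; apply/negP => Mx; apply: nx; by exists x.
have [p hp] := choice unb.
have hC0 : forall x : X, exists C : set X, [/\ nbhs x C, compact C & closed C].
  move=> x.
  have [U hU [cU clU]] := lcX x I.
  exists U; split => //.
  move: hU; rewrite /within /=; apply: filterS => y; exact.
have [C hC] := choice hC0.
pose g := fun y => `|f y|.
have gc : continuous g by move=> x; exact: cvg_norm (cf x).
pose fix pts n := if n is k.+1 then p (g (pts k) + 2) else p 0.
pose a n := g (pts n).
have aS k : a k + 2 < a k.+1 by exact: hp.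
have a0 : 0 < a 0 by exact: hp.
have aE n : a n = g (pts n) by [].
clearbody a.
have alt n m : (n < m)%N -> a n + 2 <= a m.
  elim: m => // m IH; rewrite ltnS leq_eqVlt => /orP [/eqP -> | /IH h].
    exact/ltW/aS.
  have := aS m; lra.
have aeq n m : `|a n - a m| < 2 -> n = m.
  rewrite ltr_norml => /andP [h1 h2].
  case: (ssrnat.ltngtP n m) => [nm|mn|//].
    by have h := alt _ _ nm; clear nm; exfalso; lra.
  by have h := alt _ _ mn; clear mn; exfalso; lra.
have an n : n%:R <= a n.
  elim: n => [|n IH]; first exact: ltW.
  rewrite -natr1; have := aS n; lra.
pose I n := [set y | `|a n - g y| < 1/2].
pose J n := [set y | `|a n - g y| <= 1/2].
pose U n := interior (C (pts n) `&` I n).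
pose K n := closure (U n).
pose A := \bigcup_n K n.
have Upts n : U n (pts n).
  rewrite /U /interior /=; apply: filterI; first by case: (hC (pts n)).
  have h2 : (0 : R) < 1/2 by lra.
  have := cvgr_dist_lt _ _ (gc (pts n)) _ h2.
  rewrite /I aE; apply; exact: nbhs_filter.
have clJ n : closed (J n).
  have -> : J n = (fun y => `|a n - g y|) @^-1` [set r : R | r <= 1/2] by [].
  apply: preimage_closed; last exact: closed_le.
  move=> x _; apply: cvg_norm; apply: cvgB; [exact: cvg_cst | exact: gc].
have KCJ n : K n `<=` C (pts n) `&` J n.
  have cl : closed (C (pts n) `&` J n).
    by apply: closedI; [case: (hC (pts n)) | exact: clJ].
  move=> x Kx; apply: cl; apply: (closureS _ Kx).
  move=> y /interior_subset [Cy Iy]; split => //; exact: ltW.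
have UA n : U n `<=` A by move=> y Uy; exists n => //; exact: subset_closure.
have clA : closed A.
  move=> x clx.
  have h2 : (0 : R) < 1/2 by lra.
  have Wx : nbhs x [set y | `|g x - g y| < 1/2] 
    by have := cvgr_dist_lt _ _ (gc x) _ h2; apply; exact: nbhs_filter.
  have uniq n m y z : `|g x - g y| < 1/2 -> `|g x - g z| < 1/2 ->
      K n y -> K m z -> n = m.
    move=> hy hz /KCJ [_ jy] /KCJ [_ jz]; apply: aeq.
    move: hy hz jy jz; rewrite /J /= !ltr_norml !ler_norml.
    move=> /andP[? ?] /andP[? ?] /andP[? ?] /andP[? ?]; lra.
  have [y [[n _ Kny] Wy]] := clx _ Wx.
  exists n => //.
  have : closure (K n) x.
    move=> B nB.
    have [z [[m _ Kmz] [Bz Wz]]] := clx _ (filterI nB Wx).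
    have e := uniq _ _ _ _ Wy Wz Kny Kmz; subst m.
    by exists z.
  exact: closed_closure.
exists A; split.
- rewrite /regular_closed; apply/seteqP; split.
    move=> x [n _ Knx]; apply: (closureS _ Knx).
    by rewrite -open_subsetE //; exact: open_interior.
  move=> x /(closureS (@interior_subset _ A)); exact: clA.
- exists K; split => // n.
  have [_ cC _] := hC (pts n).
  apply: (subclosed_compact _ cC); first exact: closed_closure.
  by move=> y /KCJ [].
- have cA : {within A, continuous f} by apply: continuous_subspaceT.
  move=> /(_ f cA) [M hM].
  have Mb := archi_boundP (normr_ge0 M).
  set n := Num.Def.archi_bound _ in Mb.
  have := hM (pts n) (UA n _ (Upts n)).
  have := an n; rewrite aE /g => h1 h2.
  have := ler_norm M; lra.
Qed.
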